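(* Let $n\ge 3$, let $F$ be a set of edges of $Q_n$, and let $T$ be a proper subset of the vertex set of $Q_n$ with $|T|\ge 3$ and $|T|_0\ge|T|_1$, such that every edge of $Q_n$ joining a vertex of parity 0 in $T$ to a vertex outside $T$ belongs to $F$. If the subgraph of $Q_n$ induced by $T$ has a vertex of degree 1, then either $F$ is not minimal, or there is a proper subset $T'\subsetneq T$ which is disconnected halfway with respect to the same set $F$.
   Context: $Q_n$ is the $n$-dimensional hypercube on the binary strings of length $n$, two strings adjacent iff they differ in exactly one bit. The parity of a vertex is the number of ones in its label modulo 2. For a set $T$ of vertices, $|T|_0$ and $|T|_1$ denote the numbers of vertices of parity 0 and parity 1 in $T$. $F$ is a set of ''faulty'' edges; $Q_n-F$ is the graph with all vertices of $Q_n$ and the edges of $Q_n$ not in $F$. ''$F$ is not minimal'' means that there is a proper subset $F'\subsetneq F$ such that $Q_n-F'$ has no Hamiltonian cycle. A nonempty proper subset $T$ of the vertices of $Q_n$ is disconnected halfway (with respect to $F$) if either (1) $|T|_0\ge |T|_1$ and every edge joining a vertex of parity 0 in $T$ to a vertex outside $T$ is in $F$, or (2) $|T|_1\ge |T|_0$ and every edge joining a vertex of parity 1 in $T$ to a vertex outside $T$ is in $F$. *)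

(* Defs.v *)
From mathcomp Require Import all_boot.
Set Implicit Arguments. Unset Strict Implicit. Unset Printing Implicit Defensive.

Definition vtx (n : nat) := {ffun 'I_n -> bool}.

Definition hdist n (x y : vtx n) : nat := #|[set i | x i != y i]|.
Definition qadj n (x y : vtx n) : bool := hdist x y == 1.

Definition parity n (x : vtx n) : bool := odd #|[set i | x i]|.

Definition is_edge n (e : {set vtx n}) : bool :=
  [exists x, exists y, qadj x y && (e == [set x; y])].

Definition cnt_par n (T : {set vtx n}) (b : bool) : nat :=
  #|[set x in T | parity x == b]|.

(* Q_n - F has a Hamiltonian cycle: a cyclic ordering of all vertices in
   which consecutive vertices are adjacent via an edge not in F. *)
Definition hamiltonian n (F : {set {set vtx n}}) : Prop :=
  exists s : seq (vtx n),
    [/\ uniq s, size s = #|[set: vtx n]| &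
        cycle (fun x y => qadj x y && ([set x; y] \notin F)) s].

Definition not_minimal n (F : {set {set vtx n}}) : Prop :=
  exists F' : {set {set vtx n}}, F' \proper F /\ ~ hamiltonian F'.

Definition cut_in n (F : {set {set vtx n}}) (T : {set vtx n}) (b : bool) : Prop :=
  forall x y : vtx n, x \in T -> parity x = b -> y \notin T -> qadj x y ->
    [set x; y] \in F.

Definition disconnected_halfway n (F : {set {set vtx n}}) (T : {set vtx n}) : Prop :=
  [/\ T != set0, T \proper [set: vtx n] &
      (cnt_par T true <= cnt_par T false /\ cut_in F T false) \/
      (cnt_par T false <= cnt_par T true /\ cut_in F T true)].

Definition ind_deg n (T : {set vtx n}) (x : vtx n) : nat :=
  #|[set y in T | qadj x y]|.

(* Main.v *)
Require Import Defs.
From mathcomp Require Import all_boot.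
From mathcomp Require Import zify.
Set Implicit Arguments. Unset Strict Implicit.

Lemma qadj_sym n (x y : vtx n) : qadj x y = qadj y x.
Proof.
rewrite /qadj /hdist; suff -> : [set i | x i != y i] = [set i | y i != x i] by [].
by apply/setP=> i; rewrite !inE eq_sym.
Qed.

Lemma qadj_par n (x y : vtx n) : qadj x y -> parity y = ~~ parity x.
Proof.
rewrite /qadj /hdist => /cards1P [i0 Hi].
have Hd : forall i, (x i != y i) = (i == i0).
  by move=> i; rewrite -in_set1 -Hi inE.
have Hy0 : y i0 = ~~ x i0 by move: (Hd i0); rewrite eqxx; case: (x i0); case: (y i0).
have Hyi : forall i, i != i0 -> y i = x i.
  by move=> i /negbTE H; move: (Hd i); rewrite H; move/negbFE/eqP.
rewrite /parity.
case Hx: (x i0).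
- have E : [set i | x i] = i0 |: [set i | y i].
    apply/setP=> i; rewrite !inE; case: (eqVneq i i0) => [->|ne] /=; [by rewrite ?Hx ?Hy0 | by rewrite Hyi].
  rewrite E cardsU1 inE Hy0 Hx /=. by case: (odd _).
- have E : [set i | y i] = i0 |: [set i | x i].
    apply/setP=> i; rewrite !inE; case: (eqVneq i i0) => [->|ne] /=; [by rewrite ?Hy0 ?Hx | by rewrite Hyi].
  rewrite E cardsU1 inE Hx /=. by case: (odd _).
Qed.

Lemma qadj_neq n (x y : vtx n) : qadj x y -> x != y.
Proof. by move=> /qadj_par H; apply/eqP=> E; move: H; rewrite E; case: (parity y). Qed.

Theorem lemma4 (n : nat) (F : {set {set vtx n}}) (T : {set vtx n}) :
  3 <= n ->
  (forall e, e \in F -> is_edge e) ->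
  T \proper [set: vtx n] ->
  3 <= #|T| ->
  cnt_par T true <= cnt_par T false ->
  cut_in F T false ->
  (exists x, x \in T /\ ind_deg T x = 1) ->
  not_minimal F \/
  exists T' : {set vtx n}, T' \proper T /\ disconnected_halfway F T'.
Proof.
move=> _ _ HTp HT3 Hcnt Hcut [x [xT Hdeg]].
right.
move: Hdeg; rewrite /ind_deg => /eqP /cards1P [y Hy].
have HN : forall w, (w \in T) && qadj x w = (w == y).
  by move=> w; rewrite -in_set1 -Hy inE.
have yT : y \in T by move: (HN y); rewrite eqxx => /andP [].
have xy : qadj x y by move: (HN y); rewrite eqxx => /andP [].
have pyx := qadj_par xy.
have nxy := qadj_neq xy.
case px: (parity x).
-
  set T' := T :\: [set x; y].
  have sub : T' \subset T by apply: subsetDl.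
  have prT : T' \proper T.
    apply/properP; split => //; exists x => //; by rewrite !inE eqxx.
  exists T'; split => //.
  have card2 : #|T| <= #|T'| + 2.
    rewrite /T' cardsD.
    have : #|T :&: [set x; y]| <= 2.
      apply: (leq_trans (subset_leq_card (subsetIr T [set x; y]))); rewrite cards2; by case: (x != y).
    have : #|T :&: [set x; y]| <= #|T| by apply: subset_leq_card; apply: subsetIl.
    lia.
  split.
  + apply/set0Pn. have : 0 < #|T'| by lia. by move/card_gt0P.
  + exact: sub_proper_trans sub HTp.
  + left. split.
    * rewrite /cnt_par in Hcnt *.
      have E1 : #|[set w in T | parity w == true]| = (#|[set w in T' | parity w == true]|).+1.
        rewrite (cardsD1 x) !inE xT px eqxx add1n; congr (_.+1); apply: eq_card => w.
        rewrite /T' !inE; case: (eqVneq w x) => //= _; case: (eqVneq w y) => [->|] //=.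
        by rewrite pyx px /= andbF.
      have E2 : #|[set w in T | parity w == false]| = (#|[set w in T' | parity w == false]|).+1.
        rewrite (cardsD1 y) !inE yT pyx px eqxx add1n; congr (_.+1); apply: eq_card => w.
        rewrite /T' !inE; case: (eqVneq w y) => //= _; case: (eqVneq w x) => [->|] //=.
        by rewrite px andbF.
      lia.
    * move=> z w zT' pz wT' zw.
      case wT: (w \in T); last by apply: Hcut => //; [exact: (subsetP sub) | rewrite wT].
      move: zT' wT'; rewrite /T' !inE wT andbT negbK => /andP [nz zT] wxy.
      case/orP: wxy => /eqP E; subst w.
      + have := HN z; rewrite zT qadj_sym zw /= => /esym/eqP E. by rewrite E eqxx orbT in nz.
      + move: (qadj_par zw); rewrite pz pyx px. by [].
- set T' := [set x; y].
  have sub : T' \subset T by apply/subsetP=> z; rewrite !inE => /orP [] /eqP ->.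
  have prT : T' \proper T.
    rewrite properEcard sub /=. rewrite /T' cards2. by case: (x != y) HT3 => /=; lia.
  exists T'; split => //.
  split.
  + apply/set0Pn; exists x; by rewrite !inE eqxx.
  + exact: sub_proper_trans sub HTp.
  + left. split.
    * rewrite /cnt_par.
      have A : #|[set w in T' | parity w == true]| <= 1.
        rewrite -(cards1 y); apply: subset_leq_card; apply/subsetP => w.
        rewrite /T' !inE => /andP [/orP [] /eqP -> ] //; by rewrite px.
      have B : 1 <= #|[set w in T' | parity w == false]|.
        apply/card_gt0P; exists x; by rewrite /T' !inE eqxx px.
      lia.
    * move=> z w; rewrite /T' !inE => /orP [] /eqP -> pz wT' zw; last first.
        by rewrite pyx px in pz.
      apply: Hcut => //.
      apply/negP=> wT. move: (HN w); rewrite wT zw /= => /esym/eqP E.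
      by rewrite E eqxx orbT in wT'.
Qed.
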